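(* Let $\mathbb{F}_q$ be a finite field. For all $u,v\in\mathbb{F}_q$ with $u^3\ne27$ and $v^3\ne27$, we have $E_{\mathrm{H},u}\cong_{\mathbb{F}_q}E_{\mathrm{H},v}$ if and only if there exist $\zeta_1,\zeta_2\in\mathbb{F}_q$ with $\zeta_1^3=\zeta_2^3=1$ such that either (1) $v=\zeta_1u$, or (2) $q\equiv1\pmod3$ and $v=\frac{3\zeta_1(u+6\zeta_2)}{u-3\zeta_2}$.
   Context: For $u\in\mathbb{F}_q$ with $u^3\ne27$, the Hessian curve $E_{\mathrm{H},u}$ is the elliptic curve $X^3+Y^3+1=uXY$ over $\mathbb{F}_q$. Two such curves are $\mathbb{F}_q$-isomorphic ($\cong_{\mathbb{F}_q}$) if they are birationally equivalent over $\mathbb{F}_q$, equivalently if their Weierstrass models are isomorphic via a Weierstrass change of variables $X\mapsto\alpha^2\tilde X+\beta$, $Y\mapsto\alpha^3\tilde Y+\alpha^2\gamma\tilde X+\delta$ with $\alpha,\beta,\gamma,\delta\in\mathbb{F}_q$, $\alpha\ne0$. *)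

(* Defs.v *)
From HB Require Import structures.
From mathcomp Require Import all_boot all_order all_algebra all_field.
Set Implicit Arguments. Unset Strict Implicit. Unset Printing Implicit Defensive.
Import GRing.Theory.
Local Open Scope ring_scope.

(* A (long) Weierstrass equation
     Y^2 + a1 X Y + a3 Y = X^3 + a2 X^2 + a4 X + a6
   is given by its coefficient list (a1, a2, a3, a4, a6). *)
Record wcoef (F : Type) := WCoef { wa1 : F; wa2 : F; wa3 : F; wa4 : F; wa6 : F }.

(* Two Weierstrass equations E (coefficients a) and E' (coefficients a') are
   isomorphic over F if there is a Weierstrass change of variables
     X |-> al^2 X' + be,  Y |-> al^3 Y' + al^2 ga X' + de   (al <> 0)
   over F transforming the equation of E into al^6 times the equation of E'.
   Expanding the substitution, this is exactly the standard system of
   coefficient transformation formulas (Silverman III.1, u=al, r=be, s=ga,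
   t=de): *)
Definition weier_iso (F : fieldType) (E E' : wcoef F) : Prop :=
  exists al be ga de : F,
    al != 0 /\
    [/\ al * wa1 E' = wa1 E + 2 * ga,
        al ^+ 2 * wa2 E' = wa2 E - ga * wa1 E + 3 * be - ga ^+ 2,
        al ^+ 3 * wa3 E' = wa3 E + be * wa1 E + 2 * de,
        al ^+ 4 * wa4 E' = wa4 E - ga * wa3 E + 2 * be * wa2 E
                           - (de + be * ga) * wa1 E + 3 * be ^+ 2 - 2 * ga * de
      & al ^+ 6 * wa6 E' = wa6 E + be * wa4 E + be ^+ 2 * wa2 E + be ^+ 3
                           - de * wa3 E - de ^+ 2 - be * de * wa1 E].

(* Weierstrass model of the Hessian curve E_{H,u} : X^3 + Y^3 + 1 = u X Y,
   valid in every characteristic (when u^3 <> 27):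
     Y^2 + u X Y + 9 Y = X^3 - 9 u X - (u^3 + 27),
   with discriminant (u^3 - 27)^3.  In projective coordinates (X:Y:Z) of the
   Hessian, with O = (1:-1:0), the birational map is
     W0 = 3X + 3Y + uZ,  x = -(9Z + u^2 (X+Y)) / W0,  y = (u^3 - 27) X / W0. *)
Definition hessian_weier (F : fieldType) (u : F) : wcoef F :=
  WCoef u 0 9 (- (9 * u)) (- (u ^+ 3 + 27)).

Definition hessian_iso (F : fieldType) (u v : F) : Prop :=
  weier_iso (hessian_weier u) (hessian_weier v).

(* Main.v *)
Require Import Defs.
From HB Require Import structures.
From mathcomp Require Import all_boot all_order all_algebra all_field.
From mathcomp Require Import all_fingroup all_solvable.
From mathcomp Require Import ring.
Import GRing.Theory.
Set Implicit Arguments. Unset Strict Implicit.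
Local Open Scope ring_scope.

Section Alg.
Variable F : fieldType.
Implicit Types u v al b g d m z w : F.

Definition isoE u v al b g d : Prop :=
  [/\ al * v = u + 2 * g,
      al ^+ 2 * 0 = 0 - g * u + 3 * b - g ^+ 2,
      al ^+ 3 * 9 = 9 + b * u + 2 * d,
      al ^+ 4 * - (9 * v) = - (9 * u) - g * 9 + 2 * b * 0 - (d + b * g) * u + 3 * b ^+ 2 - 2 * g * d
    & al ^+ 6 * - (v ^+ 3 + 27) = - (u ^+ 3 + 27) + b * - (9 * u) + b ^+ 2 * 0 + b ^+ 3 - d * 9 - d ^+ 2 - b * d * u].

Lemma w3 w : w^+2 + w + 1 = 0 -> w^+3 = 1.
Proof. move=> h; apply/eqP; rewrite -subr_eq0.
have -> : w^+3 - 1 = (w - 1) * (w^+2 + w + 1) by ring.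
by rewrite h mulr0.
Qed.

Lemma cube1_neq0 z : z ^+ 3 = 1 -> z != 0.
Proof. by move=> hz; apply/eqP => z0; move: hz; rewrite z0 exprS mul0r => /esym/eqP; rewrite oner_eq0. Qed.

Lemma cube1M z1 z2 : z1 ^+ 3 = 1 -> z2 ^+ 3 = 1 -> (z1 * z2) ^+ 3 = 1.
Proof. by move=> h1 h2; rewrite exprMn h1 h2 mulr1. Qed.

Lemma cube1X z : z ^+ 3 = 1 -> (z ^+ 2) ^+ 3 = 1.
Proof. by move=> h; rewrite -exprM mulnC exprM h expr1n. Qed.

Lemma neq3z u z : z ^+ 3 = 1 -> u ^+ 3 != 27 -> u - 3 * z != 0.
Proof.
move=> hz hu; apply/eqP => e.
have : u = 3 * z by apply/eqP; rewrite -subr_eq0 e.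
move=> hu3; move/eqP: hu; apply; rewrite hu3 exprMn hz mulr1; ring.
Qed.

Lemma LT u v al b g d zp z : (3:F) != 0 -> u ^+ 3 != 27 -> al != 0 ->
  isoE u v al b g d -> zp ^+ 3 = 1 -> z ^+ 3 = 1 ->
  3 * zp * al + g = 3 * z ->
  al ^+ 2 * (zp * v + 3 * zp ^+ 2) + b = z * u + 3 * z ^+ 2 ->
  al ^+ 2 * g * (zp * v + 3 * zp ^+ 2) + d = 0 ->
  (exists z1, z1 ^+ 3 = 1 /\ v = z1 * u) \/
  ((exists w, w ^+ 2 + w + 1 = 0) /\
   exists z1 z2, [/\ z1 ^+ 3 = 1, z2 ^+ 3 = 1 & v = 3 * z1 * (u + 6 * z2) / (u - 3 * z2)]).
Proof.
move=> h3 hu al0 [e1 _ e3 _ _] hzp hz hm hX hY.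
have h9 : (9:F) != 0 by rewrite (_ : (9:F) = 3 * 3) ?mulf_neq0 //; ring.
have zp0 := cube1_neq0 hzp.
have hg : g = 3 * z - 3 * (zp * al) by rewrite -hm; ring.
have hA : al ^+ 2 * (zp * v + 3 * zp ^+ 2) = zp * al * (u + 2 * g) + 3 * zp ^+ 2 * al ^+ 2
  by rewrite -e1; ring.
have hb : b = z * u + 3 * z ^+ 2 - (zp * al * (u + 2 * g) + 3 * zp ^+ 2 * al ^+ 2)
  by rewrite -hA -hX; ring.
have hd0 : d = - g * (al ^+ 2 * (zp * v + 3 * zp ^+ 2)).
  by apply/eqP; rewrite -subr_eq0; apply/eqP; rewrite -hY; ring.
rewrite hA in hd0.
have E3 : 9 + b * u + 2 * d - al ^+ 3 * 9 = 0 by rewrite e3 subrr.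
have key : (zp * al - z) * (27 * (zp * al) ^+ 2 - 27 * z * (zp * al) + 9 * z ^+ 2 + u ^+ 2
          + 3 * z * u - 9 * (zp * al) * u) = 0.
  transitivity (- (9 + b * u + 2 * d - al ^+ 3 * 9) + 9 * al ^+ 3 * (zp ^+ 3 - 1) - 9 * (z ^+ 3 - 1)).
    by rewrite hd0 hb hg; ring.
  by rewrite E3 hzp hz; ring.
move/eqP: key; rewrite mulf_eq0 => /orP [/eqP hb1 | /eqP hq].
- have hb1' : zp * al = z by apply/eqP; rewrite -subr_eq0 hb1.
  left; exists (zp * z ^+ 2); split; first by rewrite cube1M // cube1X.
  apply: (mulfI al0); rewrite e1 hg hb1'.
  have -> : al * (zp * z ^+ 2 * u) = (zp * al) * z ^+ 2 * u by ring.
  rewrite hb1'; have -> : z * z ^+ 2 * u = z ^+ 3 * u by ring.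
  by rewrite hz; ring.
- have hu3z := neq3z hz hu.
  have [w hwdef] : exists w, w = (9 * (zp * al) - 3 * z - 2 * u) / (u - 3 * z) by eexists.
  have hw : w ^+ 2 + w + 1 = 0.
    have -> : w ^+ 2 + w + 1 = 3 * (27 * (zp * al) ^+ 2 - 27 * z * (zp * al) + 9 * z ^+ 2 + u ^+ 2
          + 3 * z * u - 9 * (zp * al) * u) / (u - 3 * z) ^+ 2 by rewrite hwdef; field; rewrite hu3z.
    by rewrite hq mulr0 mul0r.
  right; split; first by exists w.
  have hw3 := w3 hw.
  exists (zp * w ^+ 2), (w * z); split; first by rewrite cube1M // cube1X.
    by rewrite cube1M.
  have hB : zp * al = (w * (u - 3 * z) + 3 * z + 2 * u) / 9 by rewrite hwdef; field; rewrite hu3z h9.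
  have hv : v = (u + 6 * z - 6 * (zp * al)) / al by apply: (mulfI al0); rewrite e1 hg; field; rewrite al0.
  have hal : al = zp ^+ 2 * (zp * al) by rewrite mulrA -exprSr hzp mul1r.
  have B0 : zp * al != 0 by rewrite mulf_neq0.
  have hv' : v = (u + 6 * z - 6 * (zp * al)) / (zp ^+ 2 * (zp * al)) by rewrite -hal.
  move: hv' B0; rewrite hB => -> B0.
  have hwz := neq3z (cube1M hw3 hz) hu.
  apply/eqP; rewrite -subr_eq0; apply/eqP.
  transitivity (((w ^+ 2 + w + 1) * (- 3*u^+2*w - 3*u^+2 - 18*u*z*w^+2 - 9*u*z*w + 36*u*z + 54*z^+2*w^+2 - 108*z^+2*w) - 3 * (zp ^+ 3 - 1) * w ^+ 2 * (w * (u - 3 * z) + 3 * z + 2 * u) * (u + 6 * w * z))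
     / (9 * zp ^+ 2 * ((w * (u - 3 * z) + 3 * z + 2 * u) / 9) * (u - 3 * (w * z)))).
    have B0' : w * (u - 3 * z) + 3 * z + 2 * u != 0 by apply: contraNneq B0 => ->; rewrite mul0r.
    by field; rewrite B0' zp0 hwz h9.
  by rewrite hw hzp subrr; ring.
Qed.

Lemma negiso u v al b g d : isoE u v al b g d -> isoE u v (- al) b (- g - u) (- d - u * b - 9).
Proof.
case=> e1 e2 e3 e4 e6; split.
- by transitivity (- (al * v)); [ring | rewrite e1; ring].
- by transitivity (al ^+ 2 * 0); [ring | rewrite e2; ring].
- by transitivity (- (al ^+ 3 * 9)); [ring | rewrite e3; ring].
- by transitivity (al ^+ 4 * - (9 * v)); [ring | rewrite e4; ring].
- by transitivity (al ^+ 6 * - (v ^+ 3 + 27)); [ring | rewrite e6; ring].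
Qed.

Lemma isoE_D u v al b g d : isoE u v al b g d ->
  [/\ (u + 2 * g - al * v) = 0,
      (0 - g * u + 3 * b - g ^+ 2 - al ^+ 2 * 0) = 0,
      (9 + b * u + 2 * d - al ^+ 3 * 9) = 0,
      (- (9 * u) - g * 9 + 2 * b * 0 - (d + b * g) * u + 3 * b ^+ 2 - 2 * g * d - al ^+ 4 * - (9 * v)) = 0
    & (- (u ^+ 3 + 27) + b * - (9 * u) + b ^+ 2 * 0 + b ^+ 3 - d * 9 - d ^+ 2 - b * d * u - al ^+ 6 * - (v ^+ 3 + 27)) = 0].
Proof. by case=> -> -> -> -> ->; split; rewrite subrr. Qed.

Lemma flex_eqs u v al b g d zp m X0 Y0 :
  isoE u v al b g d -> zp ^+ 3 = 1 ->
  m = 3 * zp * al + g -> X0 = al ^+ 2 * (zp * v + 3 * zp ^+ 2) + b ->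
  Y0 = al ^+ 2 * g * (zp * v + 3 * zp ^+ 2) + d ->
  [/\ al ^+ 4 * (m ^+ 2 + u * m - 3 * X0) = 0,
      al ^+ 2 * (2 * m * Y0 + u * X0 * m + u * Y0 + 9 * m - 3 * X0 ^+ 2 + 9 * u) = 0
    & Y0 ^+ 2 + u * X0 * Y0 + 9 * Y0 - X0 ^+ 3 + 9 * u * X0 + u ^+ 3 + 27 = 0].
Proof.
move=> /isoE_D [e1 e2 e3 e4 e6] hz -> -> ->; split.
- transitivity ((u + 2 * g - al * v) * (3*al^+5*zp) + (0 - g * u + 3 * b - g ^+ 2 - al ^+ 2 * 0) * (- al^+4)); first by ring.
  by rewrite e1 e2; ring.
- transitivity ((u + 2 * g - al * v) * (3*al^+5*v*zp^+2 + 9*al^+5*zp^+3) + (0 - g * u + 3 * b - g ^+ 2 - al ^+ 2 * 0) * (- 2*al^+4*v*zp - 6*al^+4*zp^+2) + (9 + b * u + 2 * d - al ^+ 3 * 9) * (3*al^+3*zp) + (- (9 * u) - g * 9 + 2 * b * 0 - (d + b * g) * u + 3 * b ^+ 2 - 2 * g * d - al ^+ 4 * - (9 * v)) * (- al^+2) + al^+6 * (zp^+3 - 1) * (- 9*v - 27*zp)); first by ring.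
  by rewrite e1 e2 e3 e4 hz; ring.
- transitivity ((0 - g * u + 3 * b - g ^+ 2 - al ^+ 2 * 0) * (- al^+4*v^+2*zp^+2 - 6*al^+4*v*zp^+3 - 9*al^+4*zp^+4) + (- (9 * u) - g * 9 + 2 * b * 0 - (d + b * g) * u + 3 * b ^+ 2 - 2 * g * d - al ^+ 4 * - (9 * v)) * (- al^+2*v*zp - 3*al^+2*zp^+2) + (- (u ^+ 3 + 27) + b * - (9 * u) + b ^+ 2 * 0 + b ^+ 3 - d * 9 - d ^+ 2 - b * d * u - al ^+ 6 * - (v ^+ 3 + 27)) * (- 1) + al^+6 * (zp^+3 - 1) * (- v^+3 - 9*v^+2*zp - 27*v*zp^+2 - 27*zp^+3 - 27)); first by ring.
  by rewrite e2 e4 e6 hz; ring.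
Qed.

Lemma uX9 u z X0 : z ^+ 3 = 1 -> u ^+ 3 != 27 -> X0 = z * u + 3 * z ^+ 2 -> u * X0 + 9 != 0.
Proof.
move=> hz hu ->; apply/eqP => e.
have : (u - 3 * z) * (u * (z * u + 3 * z ^+ 2) + 9) = z * (u ^+ 3 - 27) - 9 * u * (z ^+ 3 - 1) by ring.
rewrite e hz subrr !mulr0 subr0 => /esym/eqP; rewrite mulf_eq0 subr_eq0 (negbTE hu) orbF => /eqP z0.
by move: hz; rewrite z0 exprS mul0r => /esym/eqP; rewrite oner_eq0.
Qed.

Lemma YY u z X0 Y0 : z ^+ 3 = 1 -> X0 = z * u + 3 * z ^+ 2 ->
  Y0 ^+ 2 + (u * X0 + 9) * Y0 = X0 ^+ 3 - 9 * u * X0 - u ^+ 3 - 27 ->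
  Y0 = 0 \/ Y0 = - (u * X0 + 9).
Proof.
move=> hz hX e.
have : Y0 * (Y0 + (u * X0 + 9)) = 0.
  have -> : Y0 * (Y0 + (u * X0 + 9)) = Y0 ^+ 2 + (u * X0 + 9) * Y0 by ring.
  rewrite e hX.
  have -> : (z * u + 3 * z ^+ 2) ^+ 3 - 9 * u * (z * u + 3 * z ^+ 2) - u ^+ 3 - 27
    = (z ^+ 3 - 1) * ((u + 3 * z) ^+ 3 + 27) by ring.
  by rewrite hz subrr mul0r.
move/eqP; rewrite mulf_eq0 => /orP [/eqP -> | ]; first by left.
by rewrite addr_eq0 => /eqP ->; right.
Qed.

Lemma classify u m X0 Y0 : (3:F) != 0 -> u ^+ 3 != 27 ->
  3 * X0 = m ^+ 2 + u * m ->
  (2 * m + u) * Y0 = 3 * X0 ^+ 2 - 9 * m - 9 * u - u * m * X0 ->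
  Y0 ^+ 2 + (u * X0 + 9) * Y0 = X0 ^+ 3 - 9 * u * X0 - u ^+ 3 - 27 ->
  (exists z, [/\ z ^+ 3 = 1, m = 3 * z, X0 = z * u + 3 * z ^+ 2 & Y0 = 0]) \/
  (exists z, [/\ z ^+ 3 = 1, m = - u - 3 * z, X0 = z * u + 3 * z ^+ 2 & Y0 = - (u * X0 + 9)]) \/
  ((exists w, w ^+ 2 + w + 1 = 0) /\ 3 * X0 + u ^+ 2 = 0).
Proof.
move=> h3 hu hi hii hiii.
have h27 : (27:F) != 0 by rewrite (_ : (27:F) = 3 ^+ 3) ?expf_neq0 //; ring.
have hX : X0 = (m ^+ 2 + u * m) / 3 by rewrite -hi; field; rewrite h3.
have hA : Y0 ^+ 2 + (u * X0 + 9) * Y0 - (X0 ^+ 3 - 9 * u * X0 - u ^+ 3 - 27) = 0 by rewrite hiii subrr.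
have hB : (2 * m + u) * Y0 - (3 * X0 ^+ 2 - 9 * m - 9 * u - u * m * X0) = 0 by rewrite hii subrr.
have E : (m ^+ 3 - 27) * ((m + u) ^+ 3 + 27) * (m ^+ 2 + u * m + u ^+ 2) =
   -27 * ((2 * m + u) ^+ 2 * (Y0 ^+ 2 + (u * X0 + 9) * Y0 - (X0 ^+ 3 - 9 * u * X0 - u ^+ 3 - 27))
    - ((2 * m + u) * Y0 - (3 * X0 ^+ 2 - 9 * m - 9 * u - u * m * X0)) *
      ((2 * m + u) * Y0 + (3 * X0 ^+ 2 - 9 * m - 9 * u - u * m * X0) + (u * X0 + 9) * (2 * m + u))).
  by rewrite hX; field; rewrite h3.
rewrite hA hB !mul0r mulr0 subrr mulr0 in E.
move/eqP: E; rewrite !mulf_eq0 -orbA => /or3P [e | e | e].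
-
  set z := m / 3.
  have hz : z ^+ 3 = 1.
    apply/eqP; rewrite -subr_eq0; apply/eqP.
    have -> : z ^+ 3 - 1 = (m ^+ 3 - 27) / 27 by rewrite /z; field; rewrite h27.
    by rewrite (eqP e) mul0r.
  have hm : m = 3 * z by rewrite /z; field; rewrite h3.
  have hX' : X0 = z * u + 3 * z ^+ 2 by rewrite hX /z; field; rewrite h3.
  case: (YY hz hX' hiii) => hY; first by left; exists z; split.
  right; left; exists z; split=> //.
  have N0 : 3 * X0 ^+ 2 - 9 * m - 9 * u - u * m * X0 = (z ^+ 3 - 1) * (27 * z + 9 * u) by rewrite hX' hm; ring.
  move: hii; rewrite N0 hz subrr mul0r hY => /eqP; rewrite mulrN oppr_eq0 mulf_eq0 (negbTE (uX9 hz hu hX')) orbF => /eqP h.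
  have hu6 : u = - 6 * z by apply/eqP; rewrite -subr_eq0 -h hm; apply/eqP; ring.
  by rewrite hm hu6; ring.
-
  set z := - (m + u) / 3.
  have hz : z ^+ 3 = 1.
    apply/eqP; rewrite -subr_eq0; apply/eqP.
    have -> : z ^+ 3 - 1 = - ((m + u) ^+ 3 + 27) / 27 by rewrite /z; field; rewrite h27.
    by rewrite (eqP e) oppr0 mul0r.
  have hm : m = - u - 3 * z by rewrite /z; field; rewrite h3.
  have hX' : X0 = z * u + 3 * z ^+ 2 by rewrite hX /z; field; rewrite h3.
  case: (YY hz hX' hiii) => hY; last by right; left; exists z; split.
  left; exists z; split=> //.
  have N0 : 3 * X0 ^+ 2 - 9 * m - 9 * u - u * m * X0 = (z ^+ 3 - 1) * (9 * u + 27 * z) + (u + 6 * z) * (u * X0 + 9).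
    by rewrite hX' hm; ring.
  move: hii; rewrite N0 hz subrr mul0r add0r hY mulr0 => /esym/eqP.
  rewrite mulf_eq0 (negbTE (uX9 hz hu hX')) orbF => /eqP h.
  have hu6 : u = - 6 * z by apply/eqP; rewrite -subr_eq0 -h; apply/eqP; ring.
  by rewrite hm hu6; ring.
- right; right; split; last by rewrite hi; apply/eqP.
  have [u0 | un0] := eqVneq u 0.
  + have m2 : m ^+ 2 = 0 by rewrite -(eqP e) u0; ring.
    have m0 : m = 0 by apply/eqP; move/eqP: m2; rewrite expf_eq0.
    exists (Y0 / 3 + 1).
    have hX0 : X0 = 0 by rewrite hX m0 u0; field; rewrite h3.
    move: hiii; rewrite hX0 u0 => /eqP; rewrite -subr_eq0 => /eqP e'.
    have hY : Y0 ^+ 2 + 9 * Y0 + 27 = 0 by rewrite -e'; ring.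
    have h9 : (9:F) != 0 by rewrite (_ : (9:F) = 3 * 3) ?mulf_neq0 //; ring.
    have : 9 * ((Y0 / 3 + 1) ^+ 2 + (Y0 / 3 + 1) + 1) = 0.
      by rewrite -hY; field; rewrite h3.
    by move/eqP; rewrite mulf_eq0 (negbTE h9) /= => /eqP.
  + exists (m / u).
    have -> : (m / u) ^+ 2 + m / u + 1 = (m ^+ 2 + u * m + u ^+ 2) / u ^+ 2 by field; rewrite un0.
    by rewrite (eqP e) mul0r.
Qed.

Lemma weier_trans (E E' E'' : wcoef F) : weier_iso E E' -> weier_iso E' E'' -> weier_iso E E''.
Proof.
case=> a [r [s [t [a0 [h1 h2 h3 h4 h6]]]]] [a' [r' [s' [t' [a0' [k1 k2 k3 k4 k6]]]]]].
exists (a * a'), (r + a ^+ 2 * r'), (s + a * s'), (t + a ^+ 3 * t' + a ^+ 2 * s * r').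
split; first by rewrite mulf_neq0.
have e1 : wa1 E' = (wa1 E + 2 * s) / a by rewrite -h1; field; rewrite a0.
have e2 : wa2 E' = (wa2 E - s * wa1 E + 3 * r - s ^+ 2) / a ^+ 2 by rewrite -h2; field; rewrite a0.
have e3 : wa3 E' = (wa3 E + r * wa1 E + 2 * t) / a ^+ 3 by rewrite -h3; field; rewrite a0.
have e4 : wa4 E' = (wa4 E - s * wa3 E + 2 * r * wa2 E
                           - (t + r * s) * wa1 E + 3 * r ^+ 2 - 2 * s * t) / a ^+ 4 by rewrite -h4; field; rewrite a0.
have e6 : wa6 E' = (wa6 E + r * wa4 E + r ^+ 2 * wa2 E + r ^+ 3
                           - t * wa3 E - t ^+ 2 - r * t * wa1 E) / a ^+ 6 by rewrite -h6; field; rewrite a0.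
split.
- by rewrite -[LHS]mulrA k1 e1; field; rewrite a0.
- by rewrite exprMn -[LHS]mulrA k2 e1 e2; field; rewrite a0.
- by rewrite exprMn -[LHS]mulrA k3 e1 e3; field; rewrite a0.
- by rewrite exprMn -[LHS]mulrA k4 e1 e2 e3 e4; field; rewrite a0.
- by rewrite exprMn -[LHS]mulrA k6 e1 e2 e3 e4 e6; field; rewrite a0.
Qed.

Lemma iso_rot u z : z ^+ 3 = 1 -> hessian_iso u (z * u).
Proof.
move=> hz; exists (z ^+ 2), 0, 0, 0; split.
  by rewrite expf_neq0 //; apply/eqP => z0; move: hz; rewrite z0 exprS mul0r => /esym/eqP; rewrite oner_eq0.
split => /=.
- by transitivity (z ^+ 3 * u); [ring | rewrite hz; ring].
- by ring.
- by transitivity ((z ^+ 3) ^+ 2 * 9); [ring | rewrite hz; ring].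
- by transitivity (- 9 * (z ^+ 3) ^+ 3 * u); [ring | rewrite hz; ring].
- by transitivity (- ((z ^+ 3) ^+ 4 * ((z ^+ 3) * u ^+ 3 + 27))); [ring | rewrite hz; ring].
Qed.

Lemma iso_basic u w : (3 : F) != 0 -> u ^+ 3 != 27 -> w ^+ 2 + w + 1 = 0 ->
  hessian_iso u (3 * (u + 6) / (u - 3)).
Proof.
move=> h3 hu hw.
have h9 : (9:F) != 0 by rewrite (_ : (9:F) = 3 * 3) ?mulf_neq0 //; ring.
have h81 : (81:F) != 0 by rewrite (_ : (81:F) = 3 ^+ 4) ?expf_neq0 //; ring.
have h243 : (243:F) != 0 by rewrite (_ : (243:F) = 3 ^+ 5) ?expf_neq0 //; ring.
have h729 : (729:F) != 0 by rewrite (_ : (729:F) = 3 ^+ 6) ?expf_neq0 //; ring.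
have h19683 : (19683:F) != 0 by rewrite (_ : (19683:F) = 3 ^+ 9) ?expf_neq0 //; ring.
have hu3 : u - 3 != 0.
  by apply/eqP => e; move/eqP: hu; apply; rewrite (_ : u = 3); [ring | apply/eqP; rewrite -subr_eq0 e].
have hw2 : w + 2 != 0.
  apply/eqP => e; move/eqP: h3; apply.
  transitivity (- ((w + 2) * (w - 1)) + (w ^+ 2 + w + 1)); first by ring.
  by rewrite e hw; ring.
have al0 : (- 2*u*w - u + 6*w + 3) / 9 != 0.
  rewrite mulf_neq0 ?invr_eq0 //.
  rewrite (_ : (- 2*u*w - u + 6*w + 3) = - (1 + 2 * w) * (u - 3)).
    rewrite mulf_neq0 // oppr_eq0; apply/eqP => e; move/eqP: h3; apply.
    transitivity (- (1 + 2 * w) ^+ 2 + 4 * (w ^+ 2 + w + 1)); first by ring.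
    by rewrite e hw; ring.
  by ring.
exists ((- 2*u*w - u + 6*w + 3) / 9), ((- 9*u^+2 - 27*u - 81) / 81), ((- 3*u*w - 6*u - 18*w - 9) / 9), ((27*u^+3*w + 54*u^+3 - 243*u^+2*w + 729*u*w + 729*u - 729*w - 3645) / 729); split=> //; split => /=.
- apply/eqP; rewrite -subr_eq0; apply/eqP.
  by transitivity ((w ^+ 2 + w + 1) * 0 / (1 * (u - 3) ^+ 1)); [field; rewrite ?hu3 ?h9 ?h3 ?h81 ?h243 ?h729 ?h19683 | rewrite hw; ring].
- apply/eqP; rewrite -subr_eq0; apply/eqP.
  by transitivity ((w ^+ 2 + w + 1) * (u^+2 + 12*u + 36) / 9); [field; rewrite ?hu3 ?h9 ?h3 ?h81 ?h243 ?h729 ?h19683 | rewrite hw; ring].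
- apply/eqP; rewrite -subr_eq0; apply/eqP.
  by transitivity ((w ^+ 2 + w + 1) * (- 8*u^+3*w - 4*u^+3 + 72*u^+2*w + 36*u^+2 - 216*u*w - 108*u + 216*w + 108) / 81); [field; rewrite ?hu3 ?h9 ?h3 ?h81 ?h243 ?h729 ?h19683 | rewrite hw; ring].
- apply/eqP; rewrite -subr_eq0; apply/eqP.
  by transitivity ((w ^+ 2 + w + 1) * (- 16*u^+5*w^+2 - 16*u^+5*w + 2*u^+5 + 96*u^+4*w^+2 + 96*u^+4*w - 12*u^+4 + 288*u^+3*w^+2 + 288*u^+3*w - 36*u^+3 - (2^+7*3^+3)*u^+2*w^+2 - (2^+7*3^+3)*u^+2*w + 432*u^+2 + (2^+4*3^+4*7)*u*w^+2 + (2^+4*3^+4*7)*u*w - (2*3^+4*7)*u - (2^+5*3^+5)*w^+2 - (2^+5*3^+5)*w + 972) / (243 * (u - 3) ^+ 1)); [field; rewrite ?hu3 ?h9 ?h3 ?h81 ?h243 ?h729 ?h19683 | rewrite hw; ring].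
- apply/eqP; rewrite -subr_eq0; apply/eqP.
  by transitivity ((w ^+ 2 + w + 1) * (- 128*u^+9*w^+4 - 256*u^+9*w^+3 - 96*u^+9*w^+2 + 32*u^+9*w - 29*u^+9 + (2^+6*3^+3)*u^+8*w^+4 + (2^+7*3^+3)*u^+8*w^+3 + (2^+4*3^+4)*u^+8*w^+2 - 432*u^+8*w + 27*u^+8 - (2^+6*3^+5)*u^+7*w^+4 - (2^+7*3^+5)*u^+7*w^+3 - (2^+4*3^+6)*u^+7*w^+2 + (2^+4*3^+5)*u^+7*w + (2^+3*3^+5)*u^+7 + (2^+7*3^+4*13)*u^+6*w^+4 + (2^+8*3^+4*13)*u^+6*w^+3 + (2^+5*3^+5*13)*u^+6*w^+2 - (2^+5*3^+4*13)*u^+6*w - (2^+2*3^+4*7)*u^+6 - (2^+6*3^+6*17)*u^+5*w^+4 - (2^+7*3^+6*17)*u^+5*w^+3 - (2^+4*3^+7*17)*u^+5*w^+2 + (2^+4*3^+6*17)*u^+5*w - (2*3^+6*7^+2)*u^+5 + (2^+7*3^+9)*u^+4*w^+4 + (2^+8*3^+9)*u^+4*w^+3 + (2^+5*3^+10)*u^+4*w^+2 - (2^+5*3^+9)*u^+4*w + (2*3^+9*7)*u^+4 - (2^+6*3^+7*23)*u^+3*w^+4 - (2^+7*3^+7*23)*u^+3*w^+3 - (2^+4*3^+8*23)*u^+3*w^+2 + (2^+4*3^+7*23)*u^+3*w + (2^+4*3^+7*7)*u^+3 - (2^+7*3^+9)*u^+2*w^+4 - (2^+8*3^+9)*u^+2*w^+3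 - (2^+5*3^+10)*u^+2*w^+2 + (2^+5*3^+9)*u^+2*w - (2^+2*3^+9*41)*u^+2 + (2^+6*3^+11)*u*w^+4 + (2^+7*3^+11)*u*w^+3 + (2^+4*3^+12)*u*w^+2 - (2^+4*3^+11)*u*w + (3^+11*37)*u - (2^+6*3^+9*7)*w^+4 - (2^+7*3^+9*7)*w^+3 - (2^+4*3^+10*7)*w^+2 + (2^+4*3^+9*7)*w - (3^+9*223)) / ((3^+9) * (u - 3) ^+ 3)); [field; rewrite ?hu3 ?h9 ?h3 ?h81 ?h243 ?h729 ?h19683 | rewrite hw; ring].
Qed.

Definition CONC u v : Prop :=
  (exists z1, z1 ^+ 3 = 1 /\ v = z1 * u) \/
  ((exists w, w ^+ 2 + w + 1 = 0) /\
   exists z1 z2, [/\ z1 ^+ 3 = 1, z2 ^+ 3 = 1 & v = 3 * z1 * (u + 6 * z2) / (u - 3 * z2)]).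

Lemma img u v al b g d zp : (3:F) != 0 -> u ^+ 3 != 27 -> al != 0 ->
  isoE u v al b g d -> zp ^+ 3 = 1 ->
  CONC u v \/ ((exists w, w ^+ 2 + w + 1 = 0) /\ 3 * (al ^+ 2 * (zp * v + 3 * zp ^+ 2) + b) + u ^+ 2 = 0).
Proof.
move=> h3 hu al0 H hzp.
have [m hm] : exists m, m = 3 * zp * al + g by eexists.
have [X0 hX] : exists X0, X0 = al ^+ 2 * (zp * v + 3 * zp ^+ 2) + b by eexists.
have [Y0 hY] : exists Y0, Y0 = al ^+ 2 * g * (zp * v + 3 * zp ^+ 2) + d by eexists.
have [c2 c1 c0] := flex_eqs H hzp hm hX hY.
have hi : 3 * X0 = m ^+ 2 + u * m.
  move/eqP: c2; rewrite mulf_eq0 expf_eq0 /= (negbTE al0) /= => /eqP e.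
  by apply/eqP; rewrite eq_sym -subr_eq0 e.
have hii : (2 * m + u) * Y0 = 3 * X0 ^+ 2 - 9 * m - 9 * u - u * m * X0.
  move/eqP: c1; rewrite mulf_eq0 expf_eq0 /= (negbTE al0) /= => /eqP e.
  by apply/eqP; rewrite -subr_eq0; apply/eqP; rewrite -e; ring.
have hiii : Y0 ^+ 2 + (u * X0 + 9) * Y0 = X0 ^+ 3 - 9 * u * X0 - u ^+ 3 - 27.
  by apply/eqP; rewrite -subr_eq0; apply/eqP; rewrite -c0; ring.
case: (classify h3 hu hi hii hiii) => [[z [hz hmz hXz hYz]] | [[z [hz hmz hXz hYz]] | [hw hX3]]].
- left; apply: (LT h3 hu al0 H hzp hz); [by rewrite -hm | by rewrite -hX | by rewrite -hY].
- left; apply: (LT h3 hu _ (negiso H) hzp hz).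
  + by rewrite oppr_eq0.
  + transitivity (- (3 * zp * al + g) - u); first by ring.
    by rewrite -hm hmz; ring.
  + transitivity (al ^+ 2 * (zp * v + 3 * zp ^+ 2) + b); first by ring.
    by rewrite -hX.
  + transitivity (- (al ^+ 2 * g * (zp * v + 3 * zp ^+ 2) + d) - u * (al ^+ 2 * (zp * v + 3 * zp ^+ 2) + b) - 9); first by ring.
    by rewrite -hY -hX hYz; ring.
- by right; split=> //; rewrite -hX.
Qed.

Lemma fwd u v al b g d : (3:F) != 0 -> u ^+ 3 != 27 -> al != 0 ->
  isoE u v al b g d -> CONC u v.
Proof.
move=> h3 hu al0 H.
case: (img h3 hu al0 H (expr1n _ 3)) => // [[[w hw] e1]].
have hw3 := w3 hw.
case: (img h3 hu al0 H hw3) => // [[_ ew]].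
case: (img h3 hu al0 H (cube1X hw3)) => // [[_ ew2]].
exfalso.
have w1 : w - 1 != 0.
  apply/eqP => e; move/eqP: h3; apply.
  by transitivity ((w ^+ 2 + w + 1) - (w - 1) * (w + 2)); [ring | rewrite hw e; ring].
have w21 : 1 - w ^+ 2 != 0.
  apply/eqP => e; move/eqP: h3; apply.
  have e' : w + 2 = 0 by transitivity ((w ^+ 2 + w + 1) + (1 - w ^+ 2)); [ring | rewrite hw e; ring].
  by transitivity ((w ^+ 2 + w + 1) - (w + 2) * (w - 1)); [ring | rewrite hw e'; ring].
have a3 : 3 * al ^+ 2 != 0 by rewrite mulf_neq0 // expf_neq0.
have ea : (3 * al ^+ 2) * ((- (w - 1)) * (v + 3 * (1 + w))) = 0.
  transitivity ((3 * (al ^+ 2 * (1 * v + 3 * 1 ^+ 2) + b) + u ^+ 2) -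
                (3 * (al ^+ 2 * (w * v + 3 * w ^+ 2) + b) + u ^+ 2)); first by ring.
  by rewrite e1 ew subrr.
have eb : (3 * al ^+ 2) * ((1 - w ^+ 2) * (v + 3 * (1 + w ^+ 2))) = 0.
  transitivity ((3 * (al ^+ 2 * (1 * v + 3 * 1 ^+ 2) + b) + u ^+ 2) -
                (3 * (al ^+ 2 * (w ^+ 2 * v + 3 * (w ^+ 2) ^+ 2) + b) + u ^+ 2)); first by ring.
  by rewrite e1 ew2 subrr.
move/eqP: ea; rewrite mulf_eq0 (negbTE a3) /= mulf_eq0 oppr_eq0 (negbTE w1) /= => /eqP va.
move/eqP: eb; rewrite mulf_eq0 (negbTE a3) /= mulf_eq0 (negbTE w21) /= => /eqP vb.
have : w * (w - 1) = 0.
  have : 3 * (w * (w - 1)) = 0 by transitivity ((v + 3 * (1 + w ^+ 2)) - (v + 3 * (1 + w))); [ring | rewrite va vb subrr].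
  by move/eqP; rewrite mulf_eq0 (negbTE h3) /= => /eqP.
move/eqP; rewrite mulf_eq0 (negbTE w1) orbF => /eqP w0.
by move: hw; rewrite w0 => /eqP; rewrite expr0n /= !add0r oner_eq0.
Qed.

Lemma char3 u v al b g d : (3:F) = 0 -> u ^+ 3 != 27 -> al != 0 ->
  isoE u v al b g d -> v = u.
Proof.
move=> h3 hu al0 [e1 e2 e3 e4 e6].
have u0 : u != 0.
  apply: contra hu => /eqP ->; apply/eqP; rewrite expr0n /=.
  by transitivity (9 * 3 : F); [rewrite h3 mulr0 | ring].
have hgg : g * (u + g) = 0.
  transitivity (- (0 - g * u + 3 * b - g ^+ 2) + 3 * b); first by ring.
  by rewrite -e2 h3; ring.
have hd : d = b * u.
  apply/eqP; rewrite -subr_eq0; apply/eqP.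
  transitivity (- (9 + b * u + 2 * d) + al ^+ 3 * 9 + 3 * (d + 3 - 3 * al ^+ 3)); first by ring.
  by rewrite -e3 h3; ring.
have hb : b = 0.
  have : b * u ^+ 2 = 0.
    transitivity (- ((- (9 * u) - g * 9 + 2 * b * 0 - (d + b * g) * u + 3 * b ^+ 2 - 2 * g * d)
                   - al ^+ 4 * - (9 * v)) + 3 * (- 3 * u - 3 * g - b * g * u + b ^+ 2 + 3 * al ^+ 4 * v)).
      by rewrite hd; ring.
    by rewrite -e4 subrr h3; ring.
  by move/eqP; rewrite mulf_eq0 expf_eq0 /= (negbTE u0) orbF => /eqP.
have hd0 : d = 0 by rewrite hd hb mul0r.
have hc : (al ^+ 2 * v) ^+ 3 = u ^+ 3.
  have := e6; rewrite hb hd0 => e6'.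
  transitivity (- (al ^+ 6 * - (v ^+ 3 + 27)) - al ^+ 6 * 27); first by ring.
  have h27 : (27:F) = 0 by rewrite (_ : (27:F) = 9 * 3); [rewrite h3 mulr0 | ring].
  by rewrite e6' h27; ring.
have cube : forall x y : F, x ^+ 3 = y ^+ 3 -> x = y.
  move=> x y e.
  have : (x - y) ^+ 3 = 0.
    transitivity (x ^+ 3 - y ^+ 3 + 3 * (x * y ^+ 2 - x ^+ 2 * y)); first by ring.
    by rewrite e h3; ring.
  by move/eqP; rewrite expf_eq0 /= subr_eq0 => /eqP.
have hc' := cube _ _ hc.
move/eqP: hgg; rewrite mulf_eq0 => /orP [/eqP g0 | /eqP gu].
- have av : al * v = u by rewrite e1 g0; ring.
  have : (al - 1) * u = 0.
    transitivity (al * (al * v) - al * v); first by rewrite av; ring.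
    have -> : al * (al * v) = al ^+ 2 * v by ring.
    by rewrite hc' av subrr.
  move/eqP; rewrite mulf_eq0 (negbTE u0) orbF subr_eq0 => /eqP a1.
  by move: av; rewrite a1 mul1r.
- have hg : g = - u by apply/eqP; rewrite -addr_eq0 addrC gu.
  have av : al * v = - u.
    by rewrite e1 hg; ring.
  have : (al + 1) * u = 0.
    transitivity (- (al * (al * v)) - al * v); first by rewrite av; ring.
    have -> : al * (al * v) = al ^+ 2 * v by ring.
    by rewrite hc' av subrr.
  move/eqP; rewrite mulf_eq0 (negbTE u0) orbF addr_eq0 => /eqP a1.
  by move: av; rewrite a1 mulN1r => /eqP; rewrite eqr_opp => /eqP.
Qed.

End Alg.

Lemma q1_of_w (F : finFieldType) (w : F) :
  w^+2 + w + 1 = 0 -> (3:F) != 0 -> (#|F| %% 3 = 1)%N.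
Proof.
move=> hw h3; have h3w := w3 hw.
have wn1 : w != 1.
  apply: contra h3 => /eqP e; apply/eqP; rewrite -hw e; ring.
have wn0 : w != 0.
  by apply/eqP => e; move: h3w; rewrite e exprS mul0r => /esym/eqP; rewrite oner_eq0.
have ew := expf_card w.
rewrite {1}(divn_eq #|F| 3) exprD mulnC exprM h3w expr1n mul1r in ew.
have hr := ltn_mod #|F| 3.
move: ew hr; case: (#|F| %% 3)%N => [|[|[|n]]] //.
- move=> e _; move: wn1; rewrite -e eqxx //.
- move=> e _; exfalso; move/eqP: wn1; apply.
  by apply: (mulfI wn0); rewrite mulr1 -expr2 e.
Qed.

Lemma w_of_q1 (F : finFieldType) :
  (#|F| %% 3 = 1)%N -> exists w : F, w^+2 + w + 1 = 0 /\ (3:F) != 0.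
Proof.
move=> hq.
have hd : (3 %| #|[set: {unit F}]|)%N.
  by rewrite card_finField_unit {1}(divn_eq #|F| 3) hq addn1 /= dvdn_mull.
case: (@Cauchy _ 3 [set: {unit F}]%G (erefl true) hd) => x _ ox.
have x3 : (val x) ^+ 3 = 1 by rewrite -FinRing.val_unitX -ox expg_order FinRing.val_unit1.
have x1 : val x != 1.
  apply/eqP => e; have : x = 1%g by apply: val_inj; rewrite e FinRing.val_unit1.
  by move=> ex; move: ox; rewrite ex order1.
have hw : (val x)^+2 + val x + 1 = 0.
  have : (val x - 1) * ((val x)^+2 + val x + 1) = 0.
    have e : (val x - 1) * ((val x)^+2 + val x + 1) = val x ^+ 3 - 1 by ring.
    by rewrite e x3 subrr.
  by move/eqP; rewrite mulf_eq0 subr_eq0 (negbTE x1) /= => /eqP.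
exists (val x); split=> //.
apply/eqP => h3; move/eqP: x1; apply.
have e : (val x - 1)^+2 = 0.
  have -> : (val x - 1)^+2 = ((val x)^+2 + val x + 1) - 3 * val x by ring.
  by rewrite hw h3 mul0r subr0.
by apply/eqP; rewrite -subr_eq0; move/eqP: e; rewrite expf_eq0.
Qed.

Theorem mainTheorem10 (F : finFieldType) (u v : F)
    (hu : u ^+ 3 != 27) (hv : v ^+ 3 != 27) :
  hessian_iso u v <->
  exists z1 z2 : F, z1 ^+ 3 = 1 /\ z2 ^+ 3 = 1 /\
    (v = z1 * u \/
     ((#|F| %% 3 = 1)%N /\ v = 3 * z1 * (u + 6 * z2) / (u - 3 * z2))).
Proof.
split.
- case=> al [b [g [d [al0 H]]]].
  have H' : isoE u v al b g d by exact: H.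
  have [h3|h3] := eqVneq (3:F) 0.
  + rewrite (char3 h3 hu al0 H').
    by exists 1, 1; split; [exact: expr1n | split; [exact: expr1n | left; rewrite mul1r]].
  + case: (fwd h3 hu al0 H') => [[z1 [hz1 ->]] | [[w hw] [z1 [z2 [hz1 hz2 ->]]]]].
    * by exists z1, 1; split=> //; split; [exact: expr1n | left].
    * exists z1, z2; split=> //; split=> //; right; split=> //.
      exact: (q1_of_w hw h3).
- case=> z1 [z2 [hz1 [hz2 [-> | [hq ->]]]]].
  + exact: iso_rot.
  + have [w [hw h3]] := w_of_q1 hq.
    have hu' : (z2 ^+ 2 * u) ^+ 3 != 27.
      by rewrite exprMn (cube1X hz2) mul1r.
    have e : 3 * z1 * (u + 6 * z2) / (u - 3 * z2) =
             z1 * (3 * (z2 ^+ 2 * u + 6) / (z2 ^+ 2 * u - 3)).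
      have en : z2 ^+ 2 * u + 6 = z2 ^+ 2 * (u + 6 * z2).
        by transitivity (z2 ^+ 2 * (u + 6 * z2) - 6 * (z2 ^+ 3 - 1)); [ring | rewrite hz2; ring].
      have ed : z2 ^+ 2 * u - 3 = z2 ^+ 2 * (u - 3 * z2).
        by transitivity (z2 ^+ 2 * (u - 3 * z2) + 3 * (z2 ^+ 3 - 1)); [ring | rewrite hz2; ring].
      rewrite en ed; field.
      by rewrite (neq3z hz2 hu) (cube1_neq0 hz2).
    rewrite e.
    apply: (weier_trans (iso_rot u (cube1X hz2))).
    apply: (weier_trans (iso_basic h3 hu' hw)).
    exact: iso_rot.
Qed.
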